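(* Let $H$ be a Hopf algebra, $E$ an $H$-comodule algebra, and $X\in (E\otimes H)^\times$. Define $\Delta_E^X:E\to E\otimes H$ by $\Delta_E^X(x)=X\Delta_E(x)$. Then (1) $X\in\mathcal{Z}^1(H,E)$ if and only if $(E,\Delta^X_E)$ (with $E$ acting on itself by right multiplication) is an $(H,E)$-Hopf module; (2) two Hopf $1$-cocycles $X,X'$ are cohomologous if and only if the $(H,E)$-Hopf modules $(E,\Delta_E^X)$ and $(E,\Delta_E^{X'})$ are isomorphic.
   Context: $k$ commutative ring, $\otimes=\otimes_k$. An $H$-comodule algebra is an algebra $E$ with coaction $\Delta_E:E\to E\otimes H$ that is an algebra morphism. An $(H,E)$-Hopf module is a right $E$-module $M$ with a right $H$-comodule structure $\Delta_M$ (coassociative, counital) such that $\Delta_M(ms)=\Delta_M(m)\Delta_E(s)$; a morphism is an $E$-linear $H$-colinear map. $d^0(x)=\Delta_E(x)$, $d^1(x)=x\otimes1$ for $x\in E$; $d^0(X)=(\Delta_E\otimes\mathrm{id}_H)(X)$, $d^1(X)=(\mathrm{id}_E\otimes\Delta_H)(X)$, $d^2(X)=X\otimes1$ for $X\in E\otimes H$. $\mathcal{Z}^1(H,E)=\{X\in(E\otimes H)^\times: d^2(X)d^0(X)=d^1(X)\}$; $X,X'$ are cohomologous if $X'=d^1(x^{-1})Xd^0(x)$ for some $x\in E^\times$. *)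

(* Defs.v *)
(* Associative unital algebras over a commutative ring k,
   with tensor products given by their universal property (MathComp has no
   tensor product of modules over a general commutative ring). *)
From HB Require Import structures.
From mathcomp Require Import all_boot all_order all_algebra.
Set Implicit Arguments.
Unset Strict Implicit.
Unset Printing Implicit Defensive.
Import GRing.Theory.
Local Open Scope ring_scope.

Section Defs.
Variable k : comPzRingType.

(* A k-algebra: a (possibly zero) ring A with a structure map
   eta : k -> A that is a unital ring morphism landing in the centre.
   (MathComp's algType insists on non-trivial rings, hence this record.)
   The k-module structure is  a *s x := eta a * x. *)
Record pzAlg := PzAlg {
  acarrier :> pzRingType;
  aeta : k -> acarrier;
  aetaD : forall a b, aeta (a + b) = aeta a + aeta b;
  aetaM : forall a b, aeta (a * b) = aeta a * aeta b;
  aeta1 : aeta 1 = 1;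
  aeta_central : forall a (x : acarrier), aeta a * x = x * aeta a
}.

Definition asc (A : pzAlg) (a : k) (x : A) : A := aeta A a * x.
Local Notation "a *s x" := (asc a x) (at level 40).

Definition kAlg : pzAlg :=
  @PzAlg k (fun a => a) (fun _ _ => erefl) (fun _ _ => erefl) erefl
    (fun a x => mulrC a x).

Definition is_linear (U V : pzAlg) (f : U -> V) : Prop :=
  forall (a : k) (u v : U), f (a *s u + v) = a *s f u + f v.

Definition is_bilinear (U W V : pzAlg) (f : U -> W -> V) : Prop :=
  (forall w, is_linear (fun u => f u w)) /\ (forall u, is_linear (f u)).

Definition is_alg_morph (A B : pzAlg) (f : A -> B) : Prop :=
  [/\ is_linear f, (forall x y, f (x * y) = f x * f y) & f 1 = 1].

(* A tensor product A (x) B of k-algebras: a k-algebra T with a k-bilinear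
   map tens : A -> B -> T having the universal property for bilinear maps
   (existence via tlift, uniqueness via tens_ext), and whose multiplication
   is componentwise on pure tensors.  (Quantifying the universal property
   over k-algebra targets is equivalent to quantifying over all k-modules,
   via the trivial extension k (+) V.) *)
Record tensor (A B : pzAlg) := Tensor {
  tT :> pzAlg;
  tens : A -> B -> tT;
  tens_bilinear : is_bilinear tens;
  tens_mul : forall a b c d, tens a b * tens c d = tens (a * c) (b * d);
  tens_one : tens 1 1 = 1;
  tlift : forall V : pzAlg, (A -> B -> V) -> tT -> V;
  tlift_linear : forall (V : pzAlg) (f : A -> B -> V),
      is_bilinear f -> is_linear (tlift f);
  tlift_tens : forall (V : pzAlg) (f : A -> B -> V),
      is_bilinear f -> forall a b, tlift f (tens a b) = f a b;
  tens_ext : forall (V : pzAlg) (g h : tT -> V),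
      is_linear g -> is_linear h ->
      (forall a b, g (tens a b) = h (tens a b)) -> forall x, g x = h x
}.

Arguments tlift {A B} t {V}.

Section Maps.
Variables A B C D : pzAlg.

Definition tmap (t1 : tensor A B) (t2 : tensor C D) (f : A -> C) (g : B -> D)
  : t1 -> t2 := tlift t1 (fun a b => tens t2 (f a) (g b)).
End Maps.
Arguments tmap {A B C D} t1 t2 f g _.

Section Maps2.
Variables A B : pzAlg.

Definition idDelta (tAB : tensor A B) (tBB : tensor B B) (tABB : tensor tAB B)
  (Dl : B -> tBB) : tAB -> tABB :=
  tlift tAB (fun a b => tmap tBB tABB (tens tAB a) id (Dl b)).

(* id (x) eps : A (x) B -> A (= A (x) k),  a (x) b |-> eps(b) a *)
Definition rcounit (tAB : tensor A B) (eps : B -> kAlg) : tAB -> A :=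
  tlift tAB (fun a b => eps b *s a).
End Maps2.
Arguments idDelta {A B} tAB tBB tABB Dl _.
Arguments rcounit {A B} tAB eps _.

Section Hopf.
Variables (H : pzAlg) (hh : tensor H H) (hhh : tensor hh H).

Definition lcounit (eps : H -> kAlg) : hh -> H :=
  tlift hh (fun a b => eps a *s b).

Definition is_hopf (DH : H -> hh) (eps : H -> kAlg) (S : H -> H) : Prop :=
  [/\ is_alg_morph DH, is_alg_morph eps,
      (forall h, tmap hh hhh DH id (DH h) = idDelta hh hh hhh DH (DH h)),
      (forall h, lcounit eps (DH h) = h /\ rcounit hh eps (DH h) = h)
    & [/\ is_linear S,
          (forall h, tlift hh (fun a b => S a * b) (DH h) = eps h *s 1)
        & (forall h, tlift hh (fun a b => a * S b) (DH h) = eps h *s 1)]].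

Variables (E : pzAlg) (eh : tensor E H) (ehh : tensor eh H).
Variables (DH : H -> hh) (eps : H -> kAlg) (DE : E -> eh).

Definition is_comod_alg : Prop :=
  [/\ is_alg_morph DE,
      (forall x, tmap eh ehh DE id (DE x) = idDelta eh hh ehh DH (DE x))
    & (forall x, rcounit eh eps (DE x) = x)].

(* (E, DM), with E acting on itself by right multiplication, is an
   (H,E)-Hopf module: DM is a (k-linear, coassociative, counital) right
   H-comodule structure with DM (m s) = DM(m) DE(s).  (The right E-module
   axioms hold automatically for right multiplication.) *)
Definition is_EH_hopf_module (DM : E -> eh) : Prop :=
  [/\ is_linear DM,
      (forall m, tmap eh ehh DM id (DM m) = idDelta eh hh ehh DH (DM m)),
      (forall m, rcounit eh eps (DM m) = m)
    & (forall m s, DM (m * s) = DM m * DE s)].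

Definition is_EH_hopf_morph (DM DM' : E -> eh) (f : E -> E) : Prop :=
  [/\ is_linear f, (forall m s, f (m * s) = f m * s)
    & (forall m, DM' (f m) = tmap eh eh f id (DM m))].

Definition EH_hopf_iso (DM DM' : E -> eh) : Prop :=
  exists f g : E -> E,
    [/\ is_EH_hopf_morph DM DM' f, is_EH_hopf_morph DM' DM g,
        (forall m, g (f m) = m) & (forall m, f (g m) = m)].

Definition is_unit_of (R : pzRingType) (x : R) : Prop :=
  exists y, x * y = 1 /\ y * x = 1.

Definition d0 (X : eh) : ehh := tmap eh ehh DE id X.
Definition d1 (X : eh) : ehh := idDelta eh hh ehh DH X.
Definition d2 (X : eh) : ehh := tens ehh X 1.

Definition Z1 (X : eh) : Prop := is_unit_of X /\ d2 X * d0 X = d1 X.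

(* X' = d^1(x^{-1}) X d^0(x) for some unit x of E, d^1(y) = y (x) 1 *)
Definition cohomologous (X X' : eh) : Prop :=
  exists x xinv : E, [/\ x * xinv = 1, xinv * x = 1
                       & X' = tens eh xinv 1 * X * DE x].

Definition twisted (X : eh) : E -> eh := fun x => X * DE x.
End Hopf.
End Defs.

Arguments is_hopf {k H} hh hhh DH eps S.
Arguments is_comod_alg {k H} hh {E} eh ehh DH eps DE.
Arguments is_EH_hopf_module {k H} hh {E} eh ehh DH eps DE DM.
Arguments is_EH_hopf_morph {k H E} eh DM DM' f.
Arguments EH_hopf_iso {k H E} eh DM DM'.
Arguments d0 {k H E} eh ehh DE X.
Arguments d1 {k H} hh {E} eh ehh DH X.
Arguments d2 {k H E} eh ehh X.
Arguments Z1 {k H} hh {E} eh ehh DH DE X.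
Arguments cohomologous {k H E} eh DE X X'.
Arguments twisted {k H E} eh DE X _.

(* Main.v *)
Require Import Defs.
From HB Require Import structures.
From mathcomp Require Import all_boot all_order all_algebra.
Set Implicit Arguments.
Unset Strict Implicit.
Unset Printing Implicit Defensive.
Import GRing.Theory.
Local Open Scope ring_scope.

Section Helpers.
Variable k : comPzRingType.
Local Notation "a *s x" := (asc a x) (at level 40).

Lemma asc1 (A : pzAlg k) (x : A) : 1 *s x = x.
Proof. by rewrite /asc aeta1 mul1r. Qed.
Lemma asc0 (A : pzAlg k) (a : k) : a *s (0 : A) = 0.
Proof. by rewrite /asc mulr0. Qed.
Lemma ascMr (A : pzAlg k) a (x y : A) : x * (a *s y) = a *s (x * y).
Proof. by rewrite /asc mulrA -aeta_central -mulrA. Qed.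
Lemma ascMl (A : pzAlg k) a (x y : A) : (a *s x) * y = a *s (x * y).
Proof. by rewrite /asc mulrA. Qed.
Lemma ascDr (A : pzAlg k) a (x y : A) : a *s (x + y) = a *s x + a *s y.
Proof. by rewrite /asc mulrDr. Qed.
Lemma ascDl (A : pzAlg k) a b (x : A) : (a + b) *s x = a *s x + b *s x.
Proof. by rewrite /asc aetaD mulrDl. Qed.
Lemma ascA (A : pzAlg k) a b (x : A) : a *s (b *s x) = (a * b) *s x.
Proof. by rewrite /asc aetaM mulrA. Qed.

Section Lin.
Variables (U V W : pzAlg k).
Lemma lin0 (f : U -> V) : is_linear f -> f 0 = 0.
Proof.
move=> H; have := H 1 0 0; rewrite asc0 addr0 asc1 => h.
have : f 0 - f 0 = f 0 + f 0 - f 0 by rewrite -h.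
by rewrite subrr addrK.
Qed.
Lemma linD (f : U -> V) : is_linear f -> forall u v, f (u + v) = f u + f v.
Proof. by move=> H u v; have := H 1 u v; rewrite !asc1. Qed.
Lemma linZ (f : U -> V) : is_linear f -> forall a u, f (a *s u) = a *s f u.
Proof. by move=> H a u; have := H a u 0; rewrite !addr0 (lin0 H) addr0. Qed.
Lemma lin_id : is_linear (fun u : U => u).
Proof. by []. Qed.
Lemma lin_comp (f : U -> V) (g : V -> W) :
  is_linear f -> is_linear g -> is_linear (fun u => g (f u)).
Proof. by move=> Hf Hg a u v; rewrite Hf Hg. Qed.
Lemma lin_mulr (y : V) (f : U -> V) : is_linear f -> is_linear (fun u => y * f u).
Proof. by move=> Hf a u v; rewrite Hf mulrDr ascMr. Qed.
Lemma lin_mull (y : V) (f : U -> V) : is_linear f -> is_linear (fun u => f u * y).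
Proof. by move=> Hf a u v; rewrite Hf mulrDl ascMl. Qed.
Lemma lin_add (f g : U -> V) : is_linear f -> is_linear g -> is_linear (fun u => f u + g u).
Proof.
move=> Hf Hg a u v; rewrite Hf Hg ascDr -!addrA; congr (_ + _).
by rewrite addrCA.
Qed.
Lemma lin_scale c (f : U -> V) : is_linear f -> is_linear (fun u => c *s f u).
Proof. by move=> Hf a u v; rewrite Hf ascDr !ascA mulrC. Qed.
End Lin.

Section Tens.

Lemma tens_linl {A B : pzAlg k} (t : tensor A B) b : is_linear (fun a => tens t a b).
Proof. by case: (tens_bilinear t). Qed.
Lemma tens_linr {A B : pzAlg k} (t : tensor A B) a : is_linear (tens t a).
Proof. by case: (tens_bilinear t). Qed.

Lemma bi_ext (A1 B1 C1 D1 : pzAlg k) (t1 : tensor A1 B1) (t2 : tensor C1 D1) (V : pzAlg k)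
  (F G : t1 -> t2 -> V) :
  (forall y, is_linear (F y)) -> (forall z, is_linear (fun y => F y z)) ->
  (forall y, is_linear (G y)) -> (forall z, is_linear (fun y => G y z)) ->
  (forall a b c d, F (tens t1 a b) (tens t2 c d) = G (tens t1 a b) (tens t2 c d)) ->
  forall y z, F y z = G y z.
Proof.
move=> F1 F2 G1 G2 HE y z.
apply: (tens_ext (g := fun y => F y z) (h := fun y => G y z)) => // a b.
by apply: (tens_ext (g := F (tens t1 a b)) (h := G (tens t1 a b))) => // c d.
Qed.

Lemma mult_ext {A B : pzAlg k} (t : tensor A B) (V : pzAlg k) (phi : t -> V) :
  is_linear phi ->
  (forall a b c d, phi (tens t a b * tens t c d) = phi (tens t a b) * phi (tens t c d)) ->
  forall y z, phi (y * z) = phi y * phi z.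
Proof.
move=> Hl HE.
apply: (bi_ext (F := fun y z => phi (y * z)) (G := fun y z => phi y * phi z)) => //.
- by move=> y; apply: lin_comp Hl; apply: lin_mulr.
- by move=> z; apply: (lin_comp (f := fun y => y * z)) Hl; apply: lin_mull.
- by move=> y; apply: lin_mulr.
- by move=> z; apply: lin_mull.
Qed.

Lemma tmap_bil {A B C D : pzAlg k} (t2 : tensor C D) (f : A -> C) (g : B -> D) :
  is_linear f -> is_linear g -> is_bilinear (fun a b => tens t2 (f a) (g b)).
Proof.
move=> Hf Hg; split=> [w|u].
- by move=> a x y /=; rewrite Hf; exact: (tens_linl t2 (g w) a (f x) (f y)).
- by move=> a x y /=; rewrite Hg; exact: (tens_linr t2 (f u) a (g x) (g y)).
Qed.

Lemma tmapE {A B C D : pzAlg k} (t1 : tensor A B) (t2 : tensor C D) f g :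
  is_linear f -> is_linear g -> forall a b,
  @tmap _ _ _ _ _ t1 t2 f g (tens t1 a b) = tens t2 (f a) (g b).
Proof. by move=> Hf Hg a b; rewrite /tmap tlift_tens //; apply: tmap_bil. Qed.

Lemma tmap_lin {A B C D : pzAlg k} (t1 : tensor A B) (t2 : tensor C D) f g :
  is_linear f -> is_linear g -> is_linear (@tmap _ _ _ _ _ t1 t2 f g).
Proof. by move=> Hf Hg; apply: tlift_linear; apply: tmap_bil. Qed.

Lemma tmap_mul {A B C D : pzAlg k} (t1 : tensor A B) (t2 : tensor C D) f g :
  is_alg_morph f -> is_alg_morph g -> forall y z,
  @tmap _ _ _ _ _ t1 t2 f g (y * z) = @tmap _ _ _ _ _ t1 t2 f g y * @tmap _ _ _ _ _ t1 t2 f g z.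
Proof.
move=> [Hf Mf _] [Hg Mg _]; apply: mult_ext; first exact: tmap_lin.
by move=> a b c d; rewrite tens_mul !tmapE // Mf Mg tens_mul.
Qed.

Lemma tmap_mulc {A B C : pzAlg k} (t1 : tensor A B) (t2 : tensor C B) (c : C) f :
  is_linear f -> forall y,
  @tmap _ _ _ _ _ t1 t2 (fun a => c * f a) id y = tens t2 c 1 * @tmap _ _ _ _ _ t1 t2 f id y.
Proof.
move=> Hf; apply: tens_ext.
- by apply: tmap_lin => //; apply: lin_mulr.
- by apply: lin_mulr; apply: tmap_lin.
- by move=> a b; rewrite !tmapE //; [rewrite tens_mul mul1r | apply: lin_mulr].
Qed.

Lemma tmap_mulc_id {A B : pzAlg k} (t : tensor A B) (c : A) f :
  is_linear f -> (forall a, f a = c * a) -> forall y,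
  @tmap _ _ _ _ _ t t f id y = tens t c 1 * y.
Proof.
move=> Hf Ef; apply: tens_ext.
- by apply: tmap_lin.
- by apply: lin_mulr.
- by move=> a b; rewrite !tmapE // Ef tens_mul mul1r.
Qed.

Lemma kmul {B : pzAlg k} (eps : B -> kAlg k) b d :
  is_alg_morph eps -> eps (b * d) = (eps b : k) * (eps d : k).
Proof. by case=> _ M _; rewrite M. Qed.

Lemma rcounit_bil {A B : pzAlg k} (t : tensor A B) (eps : B -> kAlg k) :
  is_alg_morph eps -> is_bilinear (fun (a : A) b => eps b *s a).
Proof.
move=> [He _ _]; split=> [w|u] a x y.
- by rewrite ascDr !ascA mulrC.
- rewrite He /= ascDl -ascA; congr (_ + _).
Qed.

Lemma rcounitE {A B : pzAlg k} (t : tensor A B) eps : is_alg_morph eps ->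
  forall a b, @rcounit _ _ _ t eps (tens t a b) = eps b *s a.
Proof. by move=> He a b; rewrite /rcounit tlift_tens //; apply: rcounit_bil. Qed.

Lemma rcounit_lin {A B : pzAlg k} (t : tensor A B) eps : is_alg_morph eps -> is_linear (@rcounit _ _ _ t eps).
Proof. by move=> He; apply: tlift_linear; apply: rcounit_bil. Qed.

Lemma rcounit_mul {A B : pzAlg k} (t : tensor A B) eps : is_alg_morph eps ->
  forall y z, @rcounit _ _ _ t eps (y * z) = @rcounit _ _ _ t eps y * @rcounit _ _ _ t eps z.
Proof.
move=> He; apply: mult_ext; first exact: rcounit_lin.
move=> a b c d; rewrite tens_mul !rcounitE // kmul //.
by rewrite ascMl ascMr ascA.
Qed.

Lemma rcounit1 {A B : pzAlg k} (t : tensor A B) eps : is_alg_morph eps -> @rcounit _ _ _ t eps 1 = 1.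
Proof.
move=> He; rewrite -(tens_one t) rcounitE //.
by case: He => _ _ ->; rewrite asc1.
Qed.
End Tens.

Section D1.
Variables (E H : pzAlg k) (eh : tensor E H) (hh : tensor H H) (ehh : tensor eh H).

Lemma lin_idH : is_linear (@id H).
Proof. by []. Qed.
Lemma lin_idE : is_linear (@id eh).
Proof. by []. Qed.

Lemma tmap_tens_lin_a (W : hh) :
  is_linear (fun a => @tmap _ _ _ _ _ hh ehh (tens eh a) id W).
Proof.
move=> c u v.
apply: (tens_ext (g := fun W => @tmap _ _ _ _ _ hh ehh (tens eh (c *s u + v)) id W)
  (h := fun W => c *s @tmap _ _ _ _ _ hh ehh (tens eh u) id W + @tmap _ _ _ _ _ hh ehh (tens eh v) id W)).
- exact: (@tmap_lin _ _ _ _ hh ehh _ id (tens_linr _ _) lin_idH).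
- apply: lin_add; first apply: lin_scale; exact: (@tmap_lin _ _ _ _ hh ehh _ id (tens_linr _ _) lin_idH).
- move=> h1 h2; rewrite !tmapE //; try exact: tens_linr.
  by rewrite (tens_linl eh h1) (tens_linl ehh h2).
Qed.

Variable DH : H -> hh.
Hypothesis DHl : is_linear DH.

Lemma d1_bil : is_bilinear (fun a b => @tmap _ _ _ _ _ hh ehh (tens eh a) id (DH b)).
Proof.
split=> [w|u]; first exact: tmap_tens_lin_a.
by apply: (lin_comp DHl); apply: (@tmap_lin _ _ _ _ hh ehh _ id (tens_linr _ _) lin_idH).
Qed.

Lemma d1E a b : @idDelta _ _ _ eh hh ehh DH (tens eh a b) = @tmap _ _ _ _ _ hh ehh (tens eh a) id (DH b).
Proof. by rewrite /idDelta tlift_tens //; apply: d1_bil. Qed.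

Lemma d1_lin : is_linear (@idDelta _ _ _ eh hh ehh DH).
Proof. by apply: tlift_linear; apply: d1_bil. Qed.

Lemma tmap_tens_mul a c (U V : hh) :
  @tmap _ _ _ _ _ hh ehh (tens eh (a * c)) id (U * V) =
  @tmap _ _ _ _ _ hh ehh (tens eh a) id U * @tmap _ _ _ _ _ hh ehh (tens eh c) id V.
Proof.
have L := fun x => tmap_lin (t1 := hh) ehh (tens_linr eh x) lin_idH.
move: U V; apply: (bi_ext (F := fun U V => @tmap _ _ _ _ _ hh ehh (tens eh (a * c)) id (U * V))
   (G := fun U V => @tmap _ _ _ _ _ hh ehh (tens eh a) id U * @tmap _ _ _ _ _ hh ehh (tens eh c) id V)).
- by move=> y; apply: lin_comp (L _); apply: lin_mulr.
- by move=> z; apply: (lin_comp (f := fun y => y * z)) (L _); apply: lin_mull.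
- by move=> y; apply: lin_mulr.
- by move=> z; apply: lin_mull (L _).
- move=> h1 h2 h3 h4; rewrite tens_mul !tmapE //; try exact: tens_linr.
  by rewrite !tens_mul.
Qed.

Lemma d1_mul : (forall x y, DH (x * y) = DH x * DH y) ->
  forall y z, @idDelta _ _ _ eh hh ehh DH (y * z) =
    @idDelta _ _ _ eh hh ehh DH y * @idDelta _ _ _ eh hh ehh DH z.
Proof.
move=> M; apply: mult_ext; first exact: d1_lin.
by move=> a b c d; rewrite tens_mul !d1E M tmap_tens_mul.
Qed.

Variable eps : H -> kAlg k.
Hypothesis epsm : is_alg_morph eps.

Lemma rc_tmap_tens a (W : hh) :
  @rcounit _ _ _ ehh eps (@tmap _ _ _ _ _ hh ehh (tens eh a) id W) = tens eh a (@rcounit _ _ _ hh eps W).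
Proof.
move: W; apply: tens_ext.
- exact: (lin_comp (@tmap_lin _ _ _ _ hh ehh _ id (tens_linr _ _) lin_idH) (rcounit_lin epsm)).
- exact: (lin_comp (rcounit_lin epsm) (tens_linr _ _)).
- move=> h1 h2; rewrite tmapE //; try exact: tens_linr.
  by rewrite !rcounitE // linZ //; apply: tens_linr.
Qed.

Lemma rc_d1 : (forall h, @rcounit _ _ _ hh eps (DH h) = h) ->
  forall Y, @rcounit _ _ _ ehh eps (@idDelta _ _ _ eh hh ehh DH Y) = Y.
Proof.
move=> Hc; apply: (tens_ext (h := id)).
- exact: lin_comp d1_lin (rcounit_lin epsm).
- exact: lin_idE.
- by move=> a b; rewrite d1E rc_tmap_tens Hc.
Qed.

Lemma rc_d0 (DE : E -> eh) : is_linear DE -> forall Y,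
  @rcounit _ _ _ ehh eps (@tmap _ _ _ _ _ eh ehh DE id Y) = DE (@rcounit _ _ _ eh eps Y).
Proof.
move=> HDE; apply: tens_ext.
- exact: lin_comp (tmap_lin _ HDE lin_idH) (rcounit_lin epsm).
- exact: lin_comp (rcounit_lin epsm) HDE.
- by move=> a b; rewrite tmapE // !rcounitE // linZ.
Qed.

Lemma rc_d2 (X : eh) : @rcounit _ _ _ ehh eps (tens ehh X 1) = X.
Proof. by rewrite rcounitE //; case: epsm => _ _ ->; rewrite asc1. Qed.
End D1.
End Helpers.

Theorem proposition1p7 (k : comPzRingType) (H E : pzAlg k)
  (hh : tensor H H) (hhh : tensor hh H) (eh : tensor E H) (ehh : tensor eh H)
  (DH : H -> hh) (eps : H -> kAlg k) (S : H -> H) (DE : E -> eh) :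
  is_hopf hh hhh DH eps S ->
  is_comod_alg hh eh ehh DH eps DE ->
  (forall X : eh, is_unit_of X ->
     (Z1 hh eh ehh DH DE X <->
      is_EH_hopf_module hh eh ehh DH eps DE (twisted eh DE X)))
  /\
  (forall X X' : eh, Z1 hh eh ehh DH DE X -> Z1 hh eh ehh DH DE X' ->
     (cohomologous eh DE X X' <->
      EH_hopf_iso eh (twisted eh DE X) (twisted eh DE X'))).
Proof.
move=> [DHm epsm coass cou anti] [DEm DEco DEcu].
have [DEl DEM DE1] := DEm.
have [DHl DHM _] := DHm.
have idm : is_alg_morph (@id H) by [].
have K : forall X Y, @tmap _ _ _ _ _ eh ehh (twisted eh DE X) id Y =
    tens ehh X 1 * @tmap _ _ _ _ _ eh ehh DE id Y.
  by move=> X Y; exact: tmap_mulc.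
have d0M : forall Y Z, @tmap _ _ _ _ _ eh ehh DE id (Y * Z) =
   @tmap _ _ _ _ _ eh ehh DE id Y * @tmap _ _ _ _ _ eh ehh DE id Z.
  by move=> Y Z; apply: tmap_mul.
have d1M := d1_mul ehh DHl DHM.
split.
- move=> X [Xi [XXi XiX]]; split.
  + move=> [_ Hc]; rewrite /d2 /d0 /d1 in Hc.
    split.
    * exact: lin_mulr DEl.
    * by move=> m; rewrite K /twisted d0M mulrA Hc DEco -d1M.
    * move=> m.
      have r1 : @rcounit _ _ _ eh eps X = 1.
        have h := rc_d1 ehh DHl epsm (fun h => (cou h).2) X.
        rewrite -Hc (rcounit_mul epsm) rc_d2 // rc_d0 // in h.
        have h2 : DE (@rcounit _ _ _ eh eps X) = 1.
          by rewrite -[DE _]mul1r -XiX -mulrA h.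
        by rewrite -(DEcu (@rcounit _ _ _ eh eps X)) h2 rcounit1.
      by rewrite /twisted (rcounit_mul epsm) r1 mul1r DEcu.
    * by move=> m s; rewrite /twisted DEM mulrA.
  + move=> [_ Hco _ _]; split; first by exists Xi.
    have := Hco 1; rewrite K /twisted DE1 mulr1.
    by rewrite /d2 /d0 /d1.
- move=> X X' _ _; split.
  + move=> [x [xi [xxi xix ->]]].
    exists (fun m => xi * m), (fun m => x * m); split.
    * split; [by move=> ? ? ?; rewrite mulrDr ascMr | by move=> m s; rewrite mulrA | move=> m].
      rewrite (tmap_mulc_id (f := fun m => xi * m) (fun a u v => etrans (mulrDr _ _ _) (congr1 (fun t => t + _) (ascMr _ _ _))) (fun _ => erefl)).
      rewrite /twisted DEM mulrA -(mulrA _ (DE x)) -DEM xxi DE1 mulr1.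
      by rewrite mulrA.
    * split; [by move=> ? ? ?; rewrite mulrDr ascMr | by move=> m s; rewrite mulrA | move=> m].
      rewrite (tmap_mulc_id (f := fun m => x * m) (fun a u v => etrans (mulrDr _ _ _) (congr1 (fun t => t + _) (ascMr _ _ _))) (fun _ => erefl)).
      by rewrite /twisted DEM !mulrA tens_mul xxi mul1r tens_one mul1r.
    * by move=> m; rewrite mulrA xxi mul1r.
    * by move=> m; rewrite mulrA xix mul1r.
  + move=> [f [g [[fl fm fc] [gl gm gc] gf fg]]].
    have fE : forall m, f m = f 1 * m by move=> m; rewrite -fm mul1r.
    have gE : forall m, g m = g 1 * m by move=> m; rewrite -gm mul1r.
    have zy : g 1 * f 1 = 1 by rewrite -gE gf.
    have yz : f 1 * g 1 = 1 by rewrite -fE fg.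
    exists (g 1), (f 1); split => //.
    have := fc 1; rewrite (tmap_mulc_id fl fE) /twisted DE1 mulr1 => h.
    by rewrite -h -mulrA -DEM yz DE1 mulr1.
Qed.
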